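(* Let $a<b$ be real numbers, $J=(a,b)\times 0\subset\mathbb{R}^2$, $N=J\cup\mathbb{R}\times(0,+\infty)$, and let $U$ be an open neighborhood of $J$ in $N$. Then there exists a half open trapezoid $T\subset U$ with base $J$.
   Context: For $c<d$ and continuous $\alpha,\beta:(c,d]\to\mathbb{R}$ with $\alpha(y)<\beta(y)$ for all $y$, the set $T=\{(x,y)\in\mathbb{R}^2:\alpha(y)\le x\le\beta(y),\ c<y\le d\}$ is a half open trapezoid. If the (finite or infinite) limits $\lim_{y\to c+0}\alpha(y)=a'$ and $\lim_{y\to c+0}\beta(y)=b'$ exist with $a'<b'$, then $(a',b')\times c$ is called the (lower) base of $T$. *)

(* Defs.v *)
From HB Require Import structures.
From mathcomp Require Import all_boot all_order all_algebra.
From mathcomp Require Import all_classical all_reals all_analysis.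
Set Implicit Arguments. Unset Strict Implicit. Unset Printing Implicit Defensive.
Import Order.TTheory GRing.Theory Num.Theory.
Import numFieldNormedType.Exports.
Local Open Scope classical_set_scope.
Local Open Scope ring_scope.

Section Defs.
Variable R : realType.

Definition half_open_trapezoid_data (T : set (R * R)) (c d : R)
  (alpha beta : R -> R) : Prop :=
  [/\ c < d,
      {within [set` `]c, d]], continuous alpha},
      {within [set` `]c, d]], continuous beta},
      (forall y, c < y <= d -> alpha y < beta y) &
      T = [set p | c < p.2 <= d /\ alpha p.2 <= p.1 <= beta p.2]].

Definition half_open_trapezoid (T : set (R * R)) : Prop :=
  exists c d alpha beta, half_open_trapezoid_data T c d alpha beta.

(* T is a half open trapezoid whose (lower) base is (a', b') x c, with a', b'
   finite reals (the only case needed here). *)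
Definition trapezoid_with_base (T : set (R * R)) (a' b' c : R) : Prop :=
  a' < b' /\
  exists d alpha beta, half_open_trapezoid_data T c d alpha beta /\
    alpha y @[y --> c^'+] --> a' /\ beta y @[y --> c^'+] --> b'.

Definition segJ (a b : R) : set (R * R) := [set p | a < p.1 < b /\ p.2 = 0].

Definition setN (a b : R) : set (R * R) := segJ a b `|` [set p | 0 < p.2].

End Defs.

(* Main.v *)
Require Import Defs.
From HB Require Import structures.
From mathcomp Require Import all_boot all_order all_algebra.
From mathcomp Require Import all_classical all_reals all_analysis.
From mathcomp Require Import ring lra.
Import Order.TTheory GRing.Theory Num.Theory.
Import numFieldNormedType.Exports.
Local Open Scope classical_set_scope.
Local Open Scope ring_scope.
Lemma tube (R : realType) (V : set (R * R)) (l r : R) :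
  open V -> (forall x, l <= x <= r -> V (x, 0)) ->
  exists2 eta : R, 0 < eta & forall x y, l <= x <= r -> `|y| < eta -> V (x, y).
Proof.
move=> oV lrV.
have /compact_near_coveringP := @segment_compact R l r.
move=> /(_ R (nbhs (0:R)) (fun y x => V (x, y)) _).
case.
- move=> x xlr.
  have : nbhs (x, (0:R)) V by apply: open_nbhs_nbhs; split => //; apply: lrV.
  move=> Vx; rewrite /= in xlr; rewrite in_itv /= in xlr. case: Vx => -[A B] /= [nA nB] H; exists (A, B) => //= -[u v] /= [Au Bv]; exact: (H (u, v)).
- move=> e /= e0 He; exists e => // x y xlr ye.
  have : ball (0:R) e y by rewrite /ball /= sub0r normrN.
  move=> /He; apply; rewrite /= in_itv /=; exact: xlr.
Qed.

Definition Hf (R : realType) (I : set (R * R)) (g : R * R -> R) (K s : R) : R :=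
  sup [set g p - K * `|p.2 * s - 1| | p in I].
Arguments Hf {R}.

Section H.
Context (R : realType) (I : set (R * R)) (g : R * R -> R) (K M D : R).
Hypothesis K0 : 0 <= K.
Hypothesis gM : forall p, I p -> g p <= M.
Hypothesis ID : forall p, I p -> 0 <= p.2 <= D.
Hypothesis In0 : I !=set0.

Let hub s : has_ubound [set g p - K * `|p.2 * s - 1| | p in I].
Proof.
exists M => _ [p Ip <-]; apply: (le_trans _ (gM p Ip)).
by rewrite lerBlDr lerDl mulr_ge0.
Qed.

Let ne s : [set g p - K * `|p.2 * s - 1| | p in I] !=set0.
Proof. by case: In0 => p Ip; exists (g p - K * `|p.2 * s - 1|), p. Qed.

Lemma Hf_ub p s : I p -> g p - K * `|p.2 * s - 1| <= Hf I g K s.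
Proof. by move=> Ip; apply: (ub_le_sup (hub s)); exists p. Qed.

Lemma Hf_le s : Hf I g K s <= M.
Proof.
apply: ge_sup (ne s) _ => _ [p Ip <-]; apply: (le_trans _ (gM p Ip)).
by rewrite lerBlDr lerDl mulr_ge0.
Qed.

Lemma Hf_lip s s' : Hf I g K s <= Hf I g K s' + K * D * `|s - s'|.
Proof.
apply: ge_sup (ne s) _ => _ [p Ip <-].
apply: (le_trans _ (lerD (Hf_ub p s' Ip) (lexx (K * D * `|s - s'|)))).
have h : `|p.2 * s' - 1| <= `|p.2 * s - 1| + D * `|s - s'|.
  have := ID p Ip => /andP[v0 vD].
  have -> : p.2 * s' - 1 = (p.2 * s - 1) + p.2 * (s' - s) by ring.
  apply: le_trans (ler_normD _ _) _; rewrite lerD2l normrM distrC.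
  by rewrite ler_wpM2r // ger0_norm.
have := ler_wpM2l K0 h; rewrite mulrDr mulrA; lra.
Qed.

Lemma Hf_cont : continuous (Hf I g K).
Proof.
have D0 : 0 <= D by case: In0 => p /ID /andP[h1 h2]; exact: le_trans h1 h2.
have L0 : 0 < K * D + 1 by rewrite ltr_wpDl ?mulr_ge0.
move=> s0; apply/cvgrPdist_lt => e e0.
apply/nbhs_ballP; exists (e / (K * D + 1)) => /=; first by rewrite divr_gt0.
move=> s; rewrite /ball /= => hs.
have h1 := Hf_lip s0 s; have h2 := Hf_lip s s0.
rewrite distrC in h2.
have h3 : K * D * `|s0 - s| <= (K * D + 1) * `|s0 - s|.
  by rewrite ler_wpM2r // lerDl.
have h4 : (K * D + 1) * `|s0 - s| < e by rewrite mulrC -ltr_pdivlMr.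
rewrite ltr_norml; apply/andP; split; lra.
Qed.

Definition alp y := y + Hf I g K y^-1.

Lemma alp_cont y : y != 0 -> {for y, continuous alp}.
Proof.
move=> y0; apply: cvgD; first exact: cvg_id.
apply: continuous_comp; first exact: inv_continuous.
exact: Hf_cont.
Qed.

Lemma alp_mem p : I p -> 0 < p.2 -> g p < alp p.2.
Proof.
move=> Ip v0; have := Hf_ub p (p.2)^-1 Ip.
rewrite divff ?gt_eqF // subrr normr0 mulr0 subr0 /alp => h.
by rewrite -(add0r (g p)) ltr_leD.
Qed.

Lemma alp_lim c0 : 0 < D ->
  (forall y, 0 < y <= D -> exists p, [/\ I p, p.2 = y & g p = c0]) ->
  M - K < c0 ->
  (forall e, 0 < e -> exists2 eta, 0 < eta & forall p, I p -> c0 + e <= g p -> eta <= p.2) ->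
  alp y @[y --> 0^'+] --> c0.
Proof.
move=> D0 Hc Hgap Htube.
apply/cvgrPdist_lt => e e0.
have e20 : 0 < e / 2 by rewrite divr_gt0.
have [eta eta0 Heta] := Htube _ e20.
have d0 : 0 < Num.min (eta / 2) (Num.min (e / 2) D).
  by rewrite !lt_min D0 e20 divr_gt0.
near=> y.
have y0 : 0 < y by near: y; exact: nbhs_right_gt.
have yd : y < Num.min (eta / 2) (Num.min (e / 2) D) by near: y; exact: nbhs_right_lt.
move: yd; rewrite !lt_min => /and3P[ye ye2 yD].
have [p [Ip py gp]] := Hc y (ltac:(by rewrite y0 ltW)).
have lb : c0 < alp y by rewrite -gp -py alp_mem // py.
have ub : Hf I g K y^-1 <= c0 + e / 2.
  apply: ge_sup; first by exists (g p - K * `|p.2 * y^-1 - 1|), p.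
  move=> _ [q Iq <-].
  have [gq|gq] := ltP (g q) (c0 + e / 2).
    apply: ltW; apply: le_lt_trans gq; rewrite lerBlDr lerDl mulr_ge0 //.
  have := Heta q Iq gq => hq.
  have h1 : 1 <= `|q.2 * y^-1 - 1|.
    have yi0 : 0 < y^-1 by rewrite invr_gt0.
    have : 2 <= q.2 * y^-1.
      rewrite ler_pdivlMr //; lra.
    move=> h2; rewrite ger0_norm; lra.
  have := gM q Iq; have := ler_wpM2l K0 h1; rewrite mulr1 => h3 h4.
  lra.
rewrite /alp in lb *; rewrite ler0_norm; last by lra.
lra.
Unshelve. all: by end_near.
Qed.
End H.

Theorem lemma5p1 (R : realType) (a b : R) (U : set (R * R)) :
  a < b ->
  U `<=` setN a b ->
  (exists V : set (R * R), open V /\ U = V `&` setN a b) ->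
  segJ a b `<=` U ->
  exists T : set (R * R), T `<=` U /\ trapezoid_with_base T a b 0.
Proof.
move=> ab _ [V [oV UV]] JU.
set w := b - a.
have w0 : 0 < w by rewrite subr_gt0.
set m1 := a + w / 3; set m2 := b - w / 3.
have hV0 : forall x, a < x < b -> V (x, 0).
  move=> x xab; have : U (x, 0) by apply: JU; split.
  by rewrite UV => -[].
have tubeab : forall l r, a < l -> r < b ->
    exists2 eta : R, 0 < eta & forall x y, l <= x <= r -> `|y| < eta -> V (x, y).
  move=> l r al rb; apply: tube => // x /andP[lx xr]; apply: hV0.
  by rewrite (lt_le_trans al lx) (le_lt_trans xr rb).
have [eta0 eta00 Heta0] := tubeab m1 m2 ltac:(rewrite /m1; lra) ltac:(rewrite /m2; lra).
set d := Num.min (eta0 / 2) (w / 12).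
have d0 : 0 < d by rewrite lt_min divr_gt0 //= divr_gt0.
have dw : d <= w / 12 by rewrite ge_min lexx orbT.
have de : d < eta0.
  apply: le_lt_trans (_ : eta0 / 2 < eta0); first by rewrite ge_min lexx.
  lra.
set IL := [set p : R * R | (0 < p.2 <= d) /\ (a <= p.1 <= m1) /\ (p.1 = a \/ ~ V p)].
set IR := [set p : R * R | (0 < p.2 <= d) /\ (m2 <= p.1 <= b) /\ (p.1 = b \/ ~ V p)].
set gR := fun p : R * R => - p.1.
have K0 : 0 <= w by exact: ltW.
have gML : forall p, IL p -> p.1 <= m1 by move=> p [_ [/andP[]]].
have gMR : forall p, IR p -> gR p <= - m2.
  by move=> p [_ [/andP[h _]]]; rewrite /gR lerN2.
have IDL : forall p, IL p -> 0 <= p.2 <= d by move=> p [/andP[h1 h2] _]; rewrite ltW.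
have IDR : forall p, IR p -> 0 <= p.2 <= d by move=> p [/andP[h1 h2] _]; rewrite ltW.
have ILa : forall y, 0 < y <= d -> IL (a, y).
  move=> y yd; split => //; split; last by left.
  by rewrite lexx /= /m1; apply: ltW; lra.
have IRb : forall y, 0 < y <= d -> IR (b, y).
  move=> y yd; split => //; split; last by left.
  by rewrite /= lexx andbT /m2; lra.
have dd : 0 < d <= d by rewrite d0 lexx.
have In0L : IL !=set0 by exists (a, d); exact: ILa.
have In0R : IR !=set0 by exists (b, d); exact: IRb.
pose al := alp R IL fst w.
pose be := fun y => - alp R IR gR w y.
have alpa : forall y, 0 < y <= d -> a < al y.
  move=> y yd; have := @alp_mem R IL fst w m1 K0 gML (a, y) (ILa y yd).
  by apply; case/andP: yd.
have beb : forall y, 0 < y <= d -> be y < b.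
  move=> y yd; have := @alp_mem R IR gR w (- m2) K0 gMR (b, y) (IRb y yd).
  by rewrite /be /gR /= ltrNl; apply; case/andP: yd.
have alm : forall y, al y <= y + m1.
  by move=> y; rewrite /al /alp lerD2l; exact: (@Hf_le R IL fst w m1 K0 gML In0L).
have bem : forall y, - be y <= y - m2.
  by move=> y; rewrite /be opprK /alp lerD2l; exact: (@Hf_le R IR gR w (- m2) K0 gMR In0R).
exists [set p | 0 < p.2 <= d /\ al p.2 <= p.1 <= be p.2]; split.
  move=> [x y] /= [yd /andP[ax xb]]; rewrite UV; split; last by right; case/andP: yd.
  have [xm1|xm1] := leP x m1.
    apply/not_notP => nV.
    have IL' : IL (x, y).
      split => //; split; last by right.
      by rewrite xm1 andbT; apply: ltW; apply: lt_le_trans ax; exact: alpa.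
    have := @alp_mem R IL fst w m1 K0 gML (x, y) IL' ltac:(by case/andP: yd).
    by rewrite /= ltNge ax.
  have [xm2|xm2] := leP m2 x.
    apply/not_notP => nV.
    have IR' : IR (x, y).
      split => //; split; last by right.
      by rewrite xm2 /=; apply: ltW; apply: le_lt_trans xb _; exact: beb.
    have := @alp_mem R IR gR w (- m2) K0 gMR (x, y) IR' ltac:(by case/andP: yd).
    rewrite /gR /= ltrNl => h.
    by move: xb; rewrite leNgt h.
  apply: Heta0; first by rewrite !ltW.
  case/andP: yd => y0 yd; rewrite gtr0_norm //; exact: le_lt_trans yd de.
split => //.
exists d, al, be; split; last split.
- split => //.
  + apply: continuous_in_subspaceT => y; rewrite inE /= in_itv /= => /andP[y0 _].
    exact: (@alp_cont R IL fst w m1 d K0 gML IDL In0L y (lt0r_neq0 y0)).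
  + apply: continuous_in_subspaceT => y; rewrite inE /= in_itv /= => /andP[y0 _].
    apply: cvgN.
    exact: (@alp_cont R IR gR w (- m2) d K0 gMR IDR In0R y (lt0r_neq0 y0)).
  + move=> y /andP[y0 yd]; have := alm y; have := bem y; have m12 : m2 - m1 = w / 3 by rewrite /m2 /m1 /w; lra.
    lra.
- apply: (@alp_lim R IL fst w m1 d K0 gML a d0).
  + by move=> y yd; exists (a, y); split => //; exact: ILa.
  + rewrite /m1; lra.
  + move=> e e0.
    have [eta etap He] := tubeab (Num.min (a + e) m1) m1
      ltac:(rewrite lt_min; apply/andP; split; rewrite /m1; lra) ltac:(rewrite /m1 /w; lra).
    exists eta => // -[u v] [/andP[v0 _]] [/andP[au um]] [ua|nV] aeu.
      by move: ua aeu => /= ->; lra.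
    rewrite leNgt; apply/negP => ve; apply: nV; apply: He.
      by rewrite um andbT ge_min aeu.
    by rewrite gtr0_norm.
- have := @alp_lim R IR gR w (- m2) d K0 gMR (- b) d0.
  move=> /(_ _ _ _) /cvgN; rewrite opprK; apply.
  + by move=> y yd; exists (b, y); split => //; exact: IRb.
  + rewrite /m2; lra.
  + move=> e e0.
    have [eta etap He] := tubeab m2 (Num.max (b - e) m2)
      ltac:(rewrite /m2 /w; lra) ltac:(rewrite gt_max; apply/andP; split; rewrite /m2; lra).
    exists eta => // -[u v] [/andP[v0 _]] [/andP[m2u ub]] [ub'|nV] aeu.
      by move: ub' aeu; rewrite /gR /= => ->; lra.
    rewrite leNgt; apply/negP => ve; apply: nV; apply: He.
      rewrite m2u le_max; apply/orP; left; rewrite /gR /= in aeu; lra.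
    by rewrite gtr0_norm.
Qed.
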